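(* Let $K$ and $K'$ be two non-degenerate CMIs, with $\mathrm{can}(\mathrm{pur}(K))=(C,\langle\mathbb I_K,\mathbb I_K,P_i,1\le i\le t\rangle)$. Let $K''=R_K^{K'}$ and $\mathrm{can}(\mathrm{pur}(K''))=(C'',\langle\mathbb I_{K''},\mathbb I_{K''},P''_j,1\le j\le r\rangle)$, and let $P=\bigcup_{i=1}^tP_i$, $P''=\bigcup_{j=1}^rP''_j$. If $K$ implies $K'$ and $R_K^{K'}\ne(\cdot,\langle\ \rangle)$, then $P''\subseteq P$.
   Context: Setting: $X_1,\dots,X_n$ jointly distributed discrete random variables with $H(X_i)<\infty$; distribution unspecified. $X_\alpha=(X_i,i\in\alpha)$, $X_\emptyset$ constant. A CMI is $K=(C,\langle Q_1,\dots,Q_k\rangle)$, $k\ge0$, $C\subseteq\{1,\dots,n\}$, $\langle\cdot\rangle$ an unordered multiset of subsets; valid (for a given distribution) if $\sum_iH(X_{Q_i}|X_C)-H(X_{Q_1},\dots,X_{Q_k}|X_C)=0$. Empty members may be deleted. Degenerate = valid for every distribution, written $(\cdot,\langle\ \rangle)$. ''$K$ implies $K'$'': for every joint distribution, if $K$ is valid then $K'$ is valid. $\mathrm{pur}(K)=(C,\langle Q_i\setminus C:Q_i\setminus C\ne\emptyset\rangle)$. For pure $K$: $\mathbb I_K$ = indices lying in at least two members of the collection if $k\ge2$, else $\emptyset$; $P_1,\dots,P_t$ the nonempty sets among $Q_i\setminus\mathbb I_K$; $\mathrm{can}(K)=(\cdot,\langle\ \rangle)$ if $k\le1$, $(C,\langle\mathbb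 I_K,\mathbb I_K\rangle)$ if $k\ge2,\mathbb I_K\ne\emptyset,t\le1$, $(C,\langle P_1..P_t\rangle)$ if $k\ge2,\mathbb I_K=\emptyset$, $(C,\langle\mathbb I_K,\mathbb I_K,P_1..P_t\rangle)$ if $k\ge2,\mathbb I_K\ne\emptyset,t\ge2$. For general $K$, $\mathbb I_K$ is the repeated-index set of $\mathrm{pur}(K)$; general-form notation omits the copies of $\mathbb I_K$ when empty and uses $t=0$ for $(C,\langle\mathbb I_K,\mathbb I_K\rangle)$. $R_K^{K'}$ (''$K'$ conditioning on $K$''): with $\mathrm{can}(\mathrm{pur}(K'))=(C',\langle\mathbb I_{K'},\mathbb I_{K'},P'_j,1\le j\le s\rangle)$, $D=\mathbb I_{K'}\setminus\mathbb I_K$ and $T_1,\dots,T_u$ the nonempty sets among $P'_j\setminus\mathbb I_K$: $R_K^{K'}=(\cdot,\langle\ \rangle)$ if $D=\emptyset,u\le1$; $(C'\setminus\mathbb I_K,\langle T_1..T_u\rangle)$ if $D=\emptyset,u\ge2$; $(C'\setminus\mathbb I_K,\langle D,D\rangle)$ if $D\ne\emptyset,u\le1$; $(C'\setminus\mathbb I_K,\langle D,D,T_1..T_u\rangle)$ if $D\ne\emptyset,u\ge2$. *)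

(* Defs.v *)
From HB Require Import structures.
From mathcomp Require Import all_boot all_order all_algebra.
From mathcomp Require Import all_classical all_reals all_analysis.
Set Implicit Arguments. Unset Strict Implicit. Unset Printing Implicit Defensive.
Import Order.TTheory GRing.Theory Num.Theory.
Local Open Scope ring_scope.

(* Every
   countable alphabet is encoded into nat, so an outcome is a function
   'I_n -> nat and the joint law is a probability mass function on these. *)

Definition outcome (n : nat) := {ffun 'I_n -> nat}.

(* the coordinates outside alpha are zeroed: proj alpha x encodes X_alpha *)
Definition proj n (alpha : {set 'I_n}) (x : outcome n) : outcome n :=
  [ffun i => if i \in alpha then x i else 0%N].

Section Entropy.
Variable R : realType.
Variable n : nat.
Variable p : outcome n -> R.

Definition marg (alpha : {set 'I_n}) (y : outcome n) : R :=
  fine (\esum_(x in [set x | proj alpha x = y]) (p x)%:E).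

Definition entropy (alpha : {set 'I_n}) : \bar R :=
  \esum_(y in range (proj alpha)) (- (marg alpha y * ln (marg alpha y)))%:E.

End Entropy.

Record dist (R : realType) (n : nat) := Dist {
  pmf : outcome n -> R;
  pmf_ge0 : forall x, 0 <= pmf x;
  pmf_sum1 : (\esum_(x in [set: outcome n]) (pmf x)%:E = 1)%E;
  pmf_fin_ent : forall i : 'I_n, (entropy pmf [set i] < +oo)%E
}.

Definition Hr (R : realType) n (p : dist R n) (alpha : {set 'I_n}) : R :=
  fine (entropy (pmf p) alpha).

Definition Hc (R : realType) n (p : dist R n) (alpha C : {set 'I_n}) : R :=
  Hr p (alpha :|: C) - Hr p C.

(* K = (C, <Q_1,...,Q_k>); the multiset is represented by a list *)
Definition cmi (n : nat) := ({set 'I_n} * seq {set 'I_n})%type.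

Definition bigU n (Qs : seq {set 'I_n}) : {set 'I_n} := \bigcup_(Q <- Qs) Q.

Definition valid (R : realType) n (p : dist R n) (K : cmi n) : Prop :=
  \sum_(Q <- K.2) Hc p Q K.1 - Hc p (bigU K.2) K.1 = 0.

Definition cmi_degenerate n (K : cmi n) : Prop :=
  forall (R : realType) (p : dist R n), valid p K.

Definition cmi_implies n (K K' : cmi n) : Prop :=
  forall (R : realType) (p : dist R n), valid p K -> valid p K'.

Definition pur n (K : cmi n) : cmi n :=
  (K.1, [seq Q :\: K.1 | Q <- K.2 & Q :\: K.1 != finset.set0]).

Definition rep n (Qs : seq {set 'I_n}) : {set 'I_n} :=
  if (2 <= size Qs)%N then [set i : 'I_n | (1 < count (fun Q : {set 'I_n} => i \in Q) Qs)%N]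
  else finset.set0.

Definition IK n (K : cmi n) : {set 'I_n} := rep (pur K).2.

(* general form (C, <I, I, P_1..P_t>), the copies of I omitted when I = set0 *)
Definition gform (n : nat) := ({set 'I_n} * {set 'I_n} * seq {set 'I_n})%type.

(* can of a pure CMI; None stands for (., < >) *)
Definition can n (K : cmi n) : option (gform n) :=
  let Qs := K.2 in
  if (size Qs <= 1)%N then None else
  let I := rep Qs in
  let Ps := [seq Q :\: I | Q <- Qs & Q :\: I != finset.set0] in
  if (I != finset.set0) && (size Ps <= 1)%N then Some (K.1, I, [::])
  else Some (K.1, I, Ps).

(* R_K^{K'}; None stands for (., < >) *)
Definition Rcond n (K K' : cmi n) : option (cmi n) :=
  match can (pur K') with
  | None => None
  | Some (C', I', Ps') =>
      let I := IK K in
      let D := I' :\: I in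
      let Ts := [seq P :\: I | P <- Ps' & P :\: I != finset.set0] in
      if D == finset.set0 then
        (if (size Ts <= 1)%N then None else Some (C' :\: I, Ts))
      else
        (if (size Ts <= 1)%N then Some (C' :\: I, [:: D; D])
         else Some (C' :\: I, [:: D, D & Ts]))
  end.

Definition Punion n (K : cmi n) : {set 'I_n} :=
  match can (pur K) with
  | Some (_, _, Ps) => bigU Ps
  | None => finset.set0
  end.

(* Main.v *)
Set Warnings "-all".
From mathcomp Require Import ring lra.
Require Import Defs.
From HB Require Import structures.
From mathcomp Require Import all_boot all_order all_algebra.
From mathcomp Require Import all_classical all_reals all_analysis.
Require Import Defs.
Set Implicit Arguments. Unset Strict Implicit. Unset Printing Implicit Defensive.
Import Order.TTheory GRing.Theory Num.Theory.
Local Open Scope classical_set_scope.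
Local Open Scope ring_scope.

Lemma esum_supp (R : realType) (T : choiceType) (a : T -> \bar R) (s : seq T) :
  uniq s -> (forall t, (0 <= a t)%E) -> (forall t, t \notin s -> a t = 0%E) ->
  \esum_(t in [set: T]) a t = (\sum_(t <- s) a t)%E.
Proof.
move=> us a0 aS.
rewrite (esumID [set` s]) //.
rewrite [X in (_ + X)%E]esum1 ?adde0; last first.
  by move=> t [_ /= ts]; apply: aS; apply/negP.
rewrite setTI esum_fset //.
by rewrite -fsbig_seq.
Qed.

Definition f0 n : outcome n := [ffun _ => 0%N].
Definition f1 n (x y : 'I_n) : outcome n := [ffun i => nat_of_bool ((i == x) || (i == y))].
Definition pm (R : realType) n (x y : 'I_n) (z : outcome n) : R :=
  if z == f0 n then 2^-1 else if z == f1 x y then 2^-1 else 0.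

Lemma f01 n (x y : 'I_n) : f0 n != f1 x y.
Proof. by apply/negP => /eqP/ffunP/(_ x); rewrite !ffunE eqxx. Qed.

Lemma pm_ge0 (R : realType) n (x y : 'I_n) z : 0 <= pm R x y z.
Proof. by rewrite /pm; case: ifP => _; [|case: ifP => _]; rewrite ?invr_ge0 ?ler0n. Qed.

Lemma esum_pm (R : realType) n (x y : 'I_n) (S : set (outcome n)) :
  (\esum_(z in S) (pm R x y z)%:E = 
   (if f0 n \in S then 2^-1 else 0)%:E + (if f1 x y \in S then 2^-1 else 0)%:E)%E.
Proof.
rewrite esum_mkcond (esum_supp _ (s := [:: f0 n; f1 x y])).
- rewrite !big_cons big_nil adde0 /pm eqxx eq_sym (negbTE (f01 x y)) eqxx.
  by case: ifP; case: ifP.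
- by rewrite /= inE (f01 x y).
- by move=> t; case: ifP => // _; rewrite lee_fin pm_ge0.
- move=> t; rewrite !inE negb_or => /andP[/negbTE h0 /negbTE h1].
  by rewrite /pm h0 h1; case: ifP.
Qed.

Lemma in_preim n (a : {set 'I_n}) (w z : outcome n) :
  (z \in [set z | proj a z = w]) = (proj a z == w).
Proof. by apply/idP/eqP => [/set_mem|/mem_set]. Qed.

Definition hh (R : realType) (m : R) := - (m * ln m).

Lemma marg_pm (R : realType) n (x y : 'I_n) a w :
  marg (pm R x y) a w =
  (if proj a (f0 n) == w then 2^-1 else 0) + (if proj a (f1 x y) == w then 2^-1 else 0).
Proof.
by rewrite /marg esum_pm !in_preim -EFinD.
Qed.

Lemma hh0 (R : realType) : hh (0 : R) = 0.
Proof. by rewrite /hh mul0r oppr0. Qed.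
Lemma hh1 (R : realType) : hh (1 : R) = 0.
Proof. by rewrite /hh ln1 mulr0 oppr0. Qed.
Lemma hh2 (R : realType) : hh (2^-1 : R) = 2^-1 * ln 2.
Proof. by rewrite /hh lnV ?mulrN ?opprK // posrE. Qed.
Lemma ln2_gt0 (R : realType) : 0 < ln (2 : R).
Proof. by rewrite ln_gt0 // ltr1n. Qed.

Definition ee n (x y : 'I_n) (a : {set 'I_n}) := (x \in a) || (y \in a).

Lemma proj01 n (x y : 'I_n) a :
  (proj a (f0 n) == proj a (f1 x y)) = ~~ ee x y a.
Proof.
rewrite /ee; apply/eqP/idP.
- move=> /ffunP h; apply/negP => /orP[] ha.
  + by move: (h x); rewrite !ffunE ha eqxx.
  + by move: (h y); rewrite !ffunE ha eqxx orbT.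
- rewrite negb_or => /andP[hx hy]; apply/ffunP => i; rewrite !ffunE.
  case: ifP => // ia.
  by case: (i =P x) hx => [<-|_]; case: (i =P y) hy => [<-|_]; rewrite ?ia.
Qed.

Lemma hh_ge0 (R : realType) (m : R) : 0 <= m <= 1 -> 0 <= hh m.
Proof.
move=> /andP[m0 m1]; rewrite /hh oppr_ge0 mulr_ge0_le0 //; exact: ln_le0.
Qed.

Lemma half_half (R : realType) : (2^-1 + 2^-1 : R) = 1.
Proof. by field. Qed.

Lemma marg_bnd (R : realType) n (x y : 'I_n) a w :
  0 <= marg (pm R x y) a w <= 1.
Proof.
by rewrite marg_pm; case: ifP => _; case: ifP => _; apply/andP; split; lra.
Qed.

Lemma entropy_pm (R : realType) n (x y : 'I_n) a :
  entropy (pm R x y) a = if ee x y a then (ln (2:R))%:E else 0%E.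
Proof.
rewrite /entropy esum_mkcond.
have r0 : proj a (f0 n) \in range (proj a) by apply/mem_set; exists (f0 n).
have r1 : proj a (f1 x y) \in range (proj a) by apply/mem_set; exists (f1 x y).
have ge0 : forall w, (0 <= if w \in range (proj a)
    then (- (marg (pm R x y) a w * ln (marg (pm R x y) a w)))%:E else 0)%E.
  by move=> w; case: ifP => // _; rewrite lee_fin; apply: hh_ge0; apply: marg_bnd.
have := proj01 x y a; case: (ee x y a) => /= h.
- rewrite (esum_supp _ (s := [:: proj a (f0 n); proj a (f1 x y)])) //; last 2 first.
  + by rewrite /= inE h.
  + move=> w; rewrite !inE negb_or => /andP[h0 h1].
    by rewrite marg_pm eq_sym (negbTE h0) eq_sym (negbTE h1) addr0 -/(hh _) hh0; case: ifP.
  rewrite !big_cons big_nil adde0 r0 r1 !marg_pm eqxx h eq_sym h eqxx.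
  rewrite addr0 add0r -/(hh _) hh2 -EFinD; congr (_%:E); by field.
- rewrite (esum_supp _ (s := [:: proj a (f0 n)])) //; last first.
  + move=> w; rewrite !inE => h0.
    rewrite marg_pm eq_sym (negbTE h0) eq_sym.
    rewrite -(eqP h) in h0 *; rewrite (negbTE h0) addr0 -/(hh _) hh0; case: ifP => //.
  by rewrite !big_cons big_nil adde0 r0 !marg_pm eqxx eq_sym h half_half -/(hh _) hh1.
Qed.

Lemma pm_sum1 (R : realType) n (x y : 'I_n) :
  (\esum_(z in [set: outcome n]) (pm R x y z)%:E = 1)%E.
Proof. by rewrite esum_pm !in_setT -EFinD half_half. Qed.

Lemma pm_fin (R : realType) n (x y : 'I_n) (i : 'I_n) :
  (entropy (pm R x y) [set i] < +oo)%E.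
Proof. by rewrite entropy_pm; case: ifP => _; rewrite ltry. Qed.

Definition dxy (R : realType) n (x y : 'I_n) : dist R n :=
  Dist (@pm_ge0 R n x y) (pm_sum1 R x y) (@pm_fin R n x y).

Lemma Hr_dxy (R : realType) n (x y : 'I_n) a :
  Hr (dxy R x y) a = if ee x y a then ln 2 else 0.
Proof. by rewrite /Hr /= entropy_pm; case: ifP. Qed.

Lemma ee_U n (x y : 'I_n) a b : ee x y (a :|: b) = ee x y a || ee x y b.
Proof. rewrite /ee !finset.in_setU. by case: (x \in a); case: (x \in b); case: (y \in a). Qed.

Lemma ee_bigU n (x y : 'I_n) s : ee x y (bigU s) = has (ee x y) s.
Proof.
rewrite /bigU; elim: s => [|Q s IH]; first by rewrite big_nil /ee !finset.in_set0.
by rewrite big_cons ee_U IH.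
Qed.

Lemma Hc_dxy (R : realType) n (x y : 'I_n) Q C :
  Hc (dxy R x y) Q C = if ee x y C then 0 else if ee x y Q then ln 2 else 0.
Proof.
rewrite /Hc !Hr_dxy ee_U.
by case: (ee x y C); case: (ee x y Q); rewrite ?orbT ?subrr ?subr0.
Qed.

Lemma valid_eeC (R : realType) n (x y : 'I_n) (K : cmi n) :
  ee x y K.1 -> valid (dxy R x y) K.
Proof.
move=> h; rewrite /valid Hc_dxy h subr0 big1_seq // => Q _.
by rewrite Hc_dxy h.
Qed.

Lemma valid_cnt (R : realType) n (x y : 'I_n) (K : cmi n) :
  ~~ ee x y K.1 -> valid (dxy R x y) K <-> (count (ee x y) K.2 <= 1)%N.
Proof.
move=> /negbTE h; rewrite /valid Hc_dxy h ee_bigU.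
have -> : \sum_(Q <- K.2) Hc (dxy R x y) Q K.1 = ln (2:R) *+ count (ee x y) K.2.
  elim: K.2 => [|Q s IH]; first by rewrite big_nil.
  rewrite big_cons IH Hc_dxy h /=; case: (ee x y Q) => /=; rewrite ?add0r // add1n -GRing.mulrS //.
have l2 := @ln2_gt0 R.
rewrite seq.has_count; case: (count (ee x y) K.2) => [|[|k]] /=.
- by rewrite subr0.
- by rewrite subrr.
- split => // /eqP; rewrite (GRing.mulrS (ln 2)) addrAC subrr add0r => /eqP h2.
  by have := l2; rewrite -(pmulrn_lgt0 _ (ltn0Sn k)) h2 ltxx.
Qed.

Lemma ee_xx n (x : 'I_n) Q : ee x x Q = (x \in Q).
Proof. by rewrite /ee orbb. Qed.

Lemma ee_D n (x y : 'I_n) Q B : ee x y (Q :\: B) = ((x \in Q) && (x \notin B)) || ((y \in Q) && (y \notin B)).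
Proof. rewrite /ee !finset.in_setD. by case: (x \in Q); case: (y \in Q); case: (x \in B); case: (y \in B). Qed.

Lemma cnt_le n (x y : 'I_n) B (q : pred {set 'I_n}) s :
  (count (ee x y) [seq Q :\: B | Q <- s & q Q] <= count (ee x y) s)%N.
Proof.
elim: s => [|Q s IH] //=; case: (q Q) => /=.
- apply: leq_add => //; rewrite ee_D /ee.
  by case: (x \in Q); case: (y \in Q); case: (x \in B); case: (y \in B).
- exact: leq_trans IH (leq_addl _ _).
Qed.

Lemma cnt_pur n (x y : 'I_n) B s : ~~ ee x y B ->
  count (ee x y) [seq Q :\: B | Q <- s & Q :\: B != finset.set0] = count (ee x y) s.
Proof.
rewrite /ee negb_or => /andP[/negbTE xB /negbTE yB].
elim: s => [|Q s IH] //=; case: ifP => /= h.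
- by rewrite IH !finset.in_setD xB yB.
- rewrite IH; move/negbFE/eqP: h => h.
  have : (x \in Q :\: B) || (y \in Q :\: B) = false by rewrite h !finset.in_set0.
  by rewrite !finset.in_setD xB yB /= => ->.
Qed.

Lemma has_diff n (x : 'I_n) B (q : pred {set 'I_n}) s :
  has (fun Q : {set 'I_n} => x \in Q) [seq Q :\: B | Q <- s & q Q] ->
  (x \notin B) && has (fun Q : {set 'I_n} => x \in Q) s.
Proof.
elim: s => [|Q s IH] //=; case: (q Q) => /=.
- rewrite finset.in_setD => /orP[/andP[-> ->]//|/IH/andP[-> ->]]; by rewrite orbT.
- by move/IH/andP => [-> ->]; rewrite orbT.
Qed.

Lemma mem_bigU n (x : 'I_n) s : (x \in bigU s) = has (fun Q : {set 'I_n} => x \in Q) s.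
Proof.
rewrite /bigU; elim: s => [|Q s IH]; first by rewrite big_nil finset.in_set0.
by rewrite big_cons finset.in_setU IH.
Qed.

Lemma mem_rep n (x : 'I_n) Qs :
  (x \in rep Qs) = (2 <= size Qs)%N && (1 < count (fun Q : {set 'I_n} => x \in Q) Qs)%N.
Proof. by rewrite /rep; case: ifP => _; rewrite ?finset.inE. Qed.

Lemma punion_prop n (K0 : cmi n) x : x \in Punion K0 ->
  (x \notin rep (pur K0).2) && has (fun Q : {set 'I_n} => x \in Q) (pur K0).2.
Proof.
rewrite /Punion /can; case: ifP => [_|hs]; first by rewrite finset.in_set0.
case: ifP => _; first by rewrite mem_bigU.
by rewrite mem_bigU => /has_diff.
Qed.

Lemma punion_plain n (C : {set 'I_n}) s x : x \in Punion (C, s) ->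
  has (fun Q : {set 'I_n} => x \in Q) s.
Proof. by move/punion_prop/andP => [_ /has_diff/andP[]]. Qed.

Lemma punion_DD n (C D : {set 'I_n}) s x : x \in Punion (C, D :: D :: s) ->
  has (fun Q : {set 'I_n} => x \in Q) s.
Proof.
move/punion_prop/andP => [hr hh].
move: (hh) => /has_diff/andP[xC]; rewrite /= orbA orbb.
case: (boolP (x \in D)) => //= xD _.
have hD : D :\: C != finset.set0.
  by apply/set0Pn; exists x; rewrite finset.in_setD xC.
move: hr; rewrite mem_rep /= hD /= finset.in_setD xD xC /=.
by [].
Qed.

Lemma cnt_xx n (x : 'I_n) s : count (ee x x) s = count (fun Q : {set 'I_n} => x \in Q) s.
Proof. by apply: eq_count => Q; rewrite ee_xx. Qed.

Lemma cnt_split n (x y : 'I_n) s :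
  (count (ee x y) s <= count (ee x x) s + count (ee y y) s)%N.
Proof.
elim: s => [|Q s IH] //=; rewrite !ee_xx /ee.
rewrite addnACA; apply: leq_add => //.
by case: (x \in Q); case: (y \in Q).
Qed.

Lemma rep_cnt n (x : 'I_n) Qs : ~~ (size Qs <= 1)%N -> x \notin rep Qs ->
  (count (ee x x) Qs <= 1)%N.
Proof. by rewrite mem_rep cnt_xx -ltnNge => -> /=; rewrite -leqNgt. Qed.

Lemma compK n (K : cmi n) x y : x \notin IK K -> y \notin IK K -> x \notin Punion K ->
  ee x y K.1 || (count (ee x y) K.2 <= 1)%N.
Proof.
move=> hx hy hP; case: (boolP (ee x y K.1)) => //= hC.
have -> : count (ee x y) K.2 = count (ee x y) (pur K).2 by rewrite /pur /= cnt_pur.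
move: hx hy hP; rewrite /IK /Punion /can.
set Qs := (pur K).2.
case: ifP => [hs _ _ _|hs hx hy]; first exact: leq_trans (count_size _ _) hs.
have nI : ~~ ee x y (rep Qs) by rewrite /ee negb_or hx hy.
case: ifP => [/andP[_ hP] _|_ hP].
- by rewrite -(cnt_pur _ nI); apply: leq_trans (count_size _ _) hP.
- have nIx : ~~ ee x x (rep Qs) by rewrite ee_xx.
  have h0 : count (ee x x) Qs = 0%N.
    rewrite -(cnt_pur _ nIx) cnt_xx; apply/eqP; rewrite -leqn0 leqNgt -seq.has_count.
    by rewrite -mem_bigU.
  apply: leq_trans (cnt_split _ _ _) _; rewrite h0 add0n.
  exact: rep_cnt (negbT hs) hy.
Qed.

Lemma can_shape n (K' : cmi n) C' I' Ps' : can (pur K') = Some (C', I', Ps') ->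
  [/\ C' = K'.1, ~~ (size (pur K').2 <= 1)%N, I' = rep (pur K').2 &
   Ps' = [::] \/ Ps' = [seq Q :\: I' | Q <- (pur K').2 & Q :\: I' != finset.set0]].
Proof.
rewrite /can; case: ifP => // hs; case: ifP => _ [<- <- <-]; split => //; by [left|right|rewrite hs].
Qed.

Lemma has_xx n (x : 'I_n) s : has (ee x x) s = has (fun Q : {set 'I_n} => x \in Q) s.
Proof. by apply: eq_has => Q; rewrite ee_xx. Qed.


Lemma core n (K' : cmi n) (I : {set 'I_n}) I' Ps' x :
  ~~ (size (pur K').2 <= 1)%N -> I' = rep (pur K').2 ->
  Ps' = [::] \/ Ps' = [seq Q :\: I' | Q <- (pur K').2 & Q :\: I' != finset.set0] ->
  let Ts := [seq P :\: I | P <- Ps' & P :\: I != finset.set0] in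
  ~~ (size Ts <= 1)%N -> has (fun Q : {set 'I_n} => x \in Q) Ts ->
  exists y, [/\ x \notin I, y \notin I, ~~ ee x y K'.1 & (2 <= count (ee x y) K'.2)%N].
Proof.
move=> hs hI [->|hPs] //=; rewrite hPs.
set Qs := (pur K').2.
set Ps := [seq Q :\: I' | Q <- Qs & _].
set Ts := [seq P :\: I | P <- Ps & _].
move=> hT hx.
have [xI hxP] := andP (has_diff hx).
have [xI' hxQ] := andP (has_diff hxP).
have [xC _] := andP (has_diff hxQ).
have cx : (count (ee x x) Ts <= 1)%N.
  apply: leq_trans (cnt_le _ _ _ _ _) _; apply: leq_trans (cnt_le _ _ _ _ _) _.
  by apply: rep_cnt hs _; rewrite -hI.
have : has (predC (ee x x)) Ts.
  rewrite seq.has_count -(ltn_add2l (count (ee x x) Ts)) count_predC addn0.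
  by apply: leq_ltn_trans cx _; rewrite ltnNge.
case/hasP => T TT /= xT.
have : T != finset.set0.
  by move: TT => /mapP[P]; rewrite mem_filter => /andP[h _] ->.
case/set0Pn => y yT.
have hy : has (fun Q : {set 'I_n} => y \in Q) Ts by apply/hasP; exists T.
have [yI hyP] := andP (has_diff hy).
have [yI' hyQ] := andP (has_diff hyP).
have [yC _] := andP (has_diff hyQ).
exists y; split => //.
  by rewrite /ee negb_or xC yC.
apply: leq_trans (cnt_le _ _ _ _ _) ; apply: leq_trans (cnt_le _ _ _ _ _) ;
  apply: leq_trans (cnt_le _ _ _ _ _).
set a := ee x x; set b := fun Q : {set 'I_n} => (y \in Q) && ~~ ee x x Q.
have h1 : (count (predU a b) Ts <= count (ee x y) Ts)%N.
  by apply: sub_count => Q; rewrite /= /a /b ee_xx /ee; case: (x \in Q); case: (y \in Q).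
apply: leq_trans h1.
have := count_predUI a b Ts.
rewrite (@eq_count _ (predI a b) pred0); last by move=> Q; rewrite /= /a /b; case: (ee x x Q); rewrite ?andbF.
rewrite count_pred0 addn0 => ->.
have ha : (0 < count a Ts)%N by rewrite -seq.has_count /a has_xx.
have hb : (0 < count b Ts)%N by rewrite -seq.has_count; apply/hasP; exists T; rewrite // /b yT.
by rewrite (leq_add ha hb).
Qed.

Lemma compK' n (K K' K'' : cmi n) x : Rcond K K' = Some K'' -> x \in Punion K'' ->
  exists y, [/\ x \notin IK K, y \notin IK K, ~~ ee x y K'.1 & (2 <= count (ee x y) K'.2)%N].
Proof.
rewrite /Rcond; case E: (can (pur K')) => [[[C' I'] Ps']|] //.
have [hC hs hI hPs] := can_shape E.
case: ifP => _; case: ifP => hT // [<-] hx.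
- exact: (core hs hI hPs (negbT hT) (punion_plain hx)).
- by have := punion_DD hx.
- exact: (core hs hI hPs (negbT hT) (punion_DD hx)).
Qed.

From mathcomp Require Import Rstruct.

Theorem mainTheorem8 (n : nat) (K K' : cmi n) :
  ~ cmi_degenerate K -> ~ cmi_degenerate K' -> cmi_implies K K' ->
  forall K'' : cmi n, Rcond K K' = Some K'' ->
  (Punion K'' \subset Punion K)%SET.
Proof.
move=> _ _ himp K'' hR; apply/fintype.subsetP => x hx; apply/negPn/negP => hnx.
have [y [xI yI hC' hc]] := compK' hR hx.
have hK := compK xI yI hnx.
have vK : valid (dxy Rdefinitions.R x y) K.
  case: (boolP (ee x y K.1)) => hC; first exact: valid_eeC.
  by apply/valid_cnt => //; move: hK; rewrite (negbTE hC).
have := himp _ (dxy Rdefinitions.R x y) vK.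
by move/(valid_cnt _ hC'); rewrite leqNgt hc.
Qed.
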